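(* Let $\mathcal{L}=(R_i:i<k)$ be a finite relational language, $K$ a Fraïssé class of finite $\mathcal{L}$-structures with the Strong Amalgamation Property, and $T$ the theory of its Fraïssé limit. Let $N=(A,B)$ be a monster model of $T_{pfc}$ (with $A$ the universe of sort $O$ and $B$ the universe of sort $P$). Then for any $A_0\subseteq A$ and $B_0\subseteq B$, we have $\mathrm{acl}(A_0\cup B_0)\cap B=B_0$.
   Context: $K$ has SAP if for all $A,B,C\in K$ and embeddings $e:A\to B$, $f:A\to C$ there are $D\in K$ and embeddings $g:B\to D$, $h:C\to D$ with $ge=hf$ and $\mathrm{im}(g)\cap\mathrm{im}(h)=\mathrm{im}(ge)$. If $R_i$ has arity $n_i$, $\mathcal{L}_{pfc}$ is the two-sorted language with sorts $O$ and $P$ and relation symbols $R^i_x(x,y_1,\dots,y_{n_i})$ with $x$ of sort $P$ and $y_1,\dots,y_{n_i}$ of sort $O$. For an $\mathcal{L}_{pfc}$-structure $M=(A,B)$ and $b\in B$, $A_b$ is the $\mathcal{L}$-structure with domain $A$ in which $R_i$ is interpreted as $\{\bar y: R^i(b,\bar y)\}$. $K_{pfc}$ is the class of finite $\mathcal{L}_{pfc}$-structures $(A,B)$ such that $A_b$ is isomorphic to a member of $K$ for every $b\in B$; it is a Fraïssé class with SAP, and $T_{pfc}$ is the theory of its Fraïssé limit (it has quantifier elimination). acl is computed in $N$ over parameters from both sorts. *)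

(* Defs.v *)
From Stdlib Require Import List Arith.
Import ListNotations.

(** * One-sorted L-structures for L = (R_i : i < k), R_i of arity ar i.
    Tuples are lists; only atoms with i < k and length = ar i are meaningful. *)
Record Lstr := { ucar : Type; urel : nat -> list ucar -> Prop }.

Definition is_finite (T : Type) : Prop := exists l : list T, forall x, In x l.

Definition embedding (k : nat) (ar : nat -> nat) (A B : Lstr)
  (f : ucar A -> ucar B) : Prop :=
  (forall x y, f x = f y -> x = y) /\
  (forall i xs, i < k -> length xs = ar i ->
     (urel A i xs <-> urel B i (map f xs))).

Definition isomorphic (k : nat) (ar : nat -> nat) (A B : Lstr) : Prop :=
  exists f, embedding k ar A B f /\ (forall y, exists x, f x = y).

Definition substr (A : Lstr) (S : ucar A -> Prop) : Lstr :=
  {| ucar := { x | S x };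
     urel := fun i xs => urel A i (map (@proj1_sig _ _) xs) |}.

(** Fraisse class of finite L-structures: finite members, nonempty, closed
    under isomorphism, HP, JEP, AP.  (Countably many isomorphism types is
    automatic for a finite relational language.) *)
Definition fraisse_class (k : nat) (ar : nat -> nat) (K : Lstr -> Prop) : Prop :=
  (forall A, K A -> is_finite (ucar A)) /\
  (exists A, K A) /\
  (forall A B, K A -> isomorphic k ar A B -> K B) /\
  (forall A S, K A -> K (substr A S)) /\
  (forall A B, K A -> K B ->
     exists C, K C /\ (exists f, embedding k ar A C f) /\
                      (exists g, embedding k ar B C g)) /\
  (forall A B C (e : ucar A -> ucar B) (f : ucar A -> ucar C),
     K A -> K B -> K C -> embedding k ar A B e -> embedding k ar A C f ->
     exists D (g : ucar B -> ucar D) (h : ucar C -> ucar D),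
       K D /\ embedding k ar B D g /\ embedding k ar C D h /\
       (forall a, g (e a) = h (f a))).

Definition SAP (k : nat) (ar : nat -> nat) (K : Lstr -> Prop) : Prop :=
  forall A B C (e : ucar A -> ucar B) (f : ucar A -> ucar C),
     K A -> K B -> K C -> embedding k ar A B e -> embedding k ar A C f ->
     exists D (g : ucar B -> ucar D) (h : ucar C -> ucar D),
       K D /\ embedding k ar B D g /\ embedding k ar C D h /\
       (forall a, g (e a) = h (f a)) /\
       (forall d, ((exists b, d = g b) /\ (exists c, d = h c)) <->
                  (exists a, d = g (e a))).

(** * Two-sorted L_pfc-structures (A,B): sort O = oc, sort P = pc;
    prel i b ys  is  R^i(b, ys). *)
Record Pstr := { oc : Type; pc : Type; prel : nat -> pc -> list oc -> Prop }.

Definition fiber (M : Pstr) (b : pc M) : Lstr :=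
  {| ucar := oc M; urel := fun i ys => prel M i b ys |}.

Definition Kpfc (k : nat) (ar : nat -> nat) (K : Lstr -> Prop) (M : Pstr) : Prop :=
  is_finite (oc M) /\ is_finite (pc M) /\
  (forall b : pc M, exists C, K C /\ isomorphic k ar (fiber M b) C).

Definition pembedding (k : nat) (ar : nat -> nat) (M N : Pstr)
  (fo : oc M -> oc N) (fp : pc M -> pc N) : Prop :=
  (forall x y, fo x = fo y -> x = y) /\
  (forall x y, fp x = fp y -> x = y) /\
  (forall i b ys, i < k -> length ys = ar i ->
     (prel M i b ys <-> prel N i (fp b) (map fo ys))).

Definition pisomorphism (k : nat) (ar : nat -> nat) (M N : Pstr)
  (fo : oc M -> oc N) (fp : pc M -> pc N) : Prop :=
  pembedding k ar M N fo fp /\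
  (forall y, exists x, fo x = y) /\ (forall y, exists x, fp x = y).

Definition psubstr (M : Pstr) (SO : oc M -> Prop) (SP : pc M -> Prop) : Pstr :=
  {| oc := { x | SO x }; pc := { y | SP y };
     prel := fun i b ys => prel M i (proj1_sig b) (map (@proj1_sig _ _) ys) |}.

(** M is a Fraisse limit of the class KK of finite L_pfc-structures:
    countable, age(M) = KK, ultrahomogeneous. *)
Definition fraisse_limit (k : nat) (ar : nat -> nat) (KK : Pstr -> Prop)
  (M : Pstr) : Prop :=
  (exists f : oc M -> nat, forall x y, f x = f y -> x = y) /\
  (exists f : pc M -> nat, forall x y, f x = f y -> x = y) /\
  (forall SO SP, is_finite { x | SO x } -> is_finite { y | SP y } ->
     KK (psubstr M SO SP)) /\
  (forall C, KK C -> exists fo fp, pembedding k ar C M fo fp) /\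
  (forall SO SP TO TP fo fp,
     is_finite { x | SO x } -> is_finite { y | SP y } ->
     pisomorphism k ar (psubstr M SO SP) (psubstr M TO TP) fo fp ->
     exists go gp, pisomorphism k ar M M go gp /\
       (forall x, go (proj1_sig x) = proj1_sig (fo x)) /\
       (forall y, gp (proj1_sig y) = proj1_sig (fp y))).

(** * First-order formulas of L_pfc (named variables, one namespace per sort). *)
Inductive pform : Type :=
| FEqO : nat -> nat -> pform
| FEqP : nat -> nat -> pform
| FRel : nat -> nat -> list nat -> pform
| FNot : pform -> pform
| FAnd : pform -> pform -> pform
| FExO : nat -> pform -> pform
| FExP : nat -> pform -> pform.

Definition upd {T : Type} (e : nat -> T) (n : nat) (v : T) : nat -> T :=
  fun m => if Nat.eqb m n then v else e m.

Fixpoint lookup_all {T : Type} (e : nat -> option T) (ys : list nat)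
  : option (list T) :=
  match ys with
  | [] => Some []
  | y :: ys' =>
      match e y, lookup_all e ys' with
      | Some a, Some l => Some (a :: l)
      | _, _ => None
      end
  end.

(** Satisfaction with partial assignments (unassigned variables make atoms
    false; for formulas whose free variables are assigned this is the usual
    Tarskian semantics). *)
Fixpoint psat (k : nat) (ar : nat -> nat) (M : Pstr)
  (eO : nat -> option (oc M)) (eP : nat -> option (pc M)) (phi : pform) : Prop :=
  match phi with
  | FEqO i j => exists a, eO i = Some a /\ eO j = Some a
  | FEqP i j => exists b, eP i = Some b /\ eP j = Some b
  | FRel r x ys =>
      r < k /\ length ys = ar r /\
      exists b zs, eP x = Some b /\ lookup_all eO ys = Some zs /\ prel M r b zs
  | FNot psi => ~ psat k ar M eO eP psi
  | FAnd psi chi => psat k ar M eO eP psi /\ psat k ar M eO eP chi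
  | FExO n psi => exists a, psat k ar M (upd eO n (Some a)) eP psi
  | FExP n psi => exists b, psat k ar M eO (upd eP n (Some b)) psi
  end.

Definition elem_equiv (k : nat) (ar : nat -> nat) (M N : Pstr) : Prop :=
  forall phi, psat k ar M (fun _ => None) (fun _ => None) phi <->
              psat k ar N (fun _ => None) (fun _ => None) phi.

Definition in_aclP (k : nat) (ar : nat -> nat) (N : Pstr)
  (A0 : oc N -> Prop) (B0 : pc N -> Prop) (b : pc N) : Prop :=
  exists (phi : pform) (x : nat) (eO : nat -> option (oc N))
         (eP : nat -> option (pc N)),
    (forall n a, eO n = Some a -> A0 a) /\
    (forall n c, n <> x -> eP n = Some c -> B0 c) /\
    psat k ar N eO (upd eP x (Some b)) phi /\
    (exists l : list (pc N), forall b',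
        psat k ar N eO (upd eP x (Some b')) phi -> In b' l).

(* Main.v *)
Require Import Defs.
From Stdlib Require Import List Arith Bool Lia Classical ClassicalEpsilon FunctionalExtensionality ProofIrrelevance.
Import ListNotations.

Fixpoint fvO (p : pform) : list nat :=
  match p with
  | FEqO i j => [i; j] | FEqP _ _ => [] | FRel _ _ ys => ys
  | FNot q => fvO q | FAnd q r => fvO q ++ fvO r
  | FExO _ q => fvO q | FExP _ q => fvO q end.
Fixpoint fvP (p : pform) : list nat :=
  match p with
  | FEqO _ _ => [] | FEqP i j => [i; j] | FRel _ x _ => [x]
  | FNot q => fvP q | FAnd q r => fvP q ++ fvP r
  | FExO _ q => fvP q | FExP _ q => fvP q end.

Lemma lookup_all_ext {T} (e e' : nat -> option T) ys :
  (forall v, In v ys -> e v = e' v) -> lookup_all e ys = lookup_all e' ys.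
Proof.
  induction ys as [|y ys IH]; intros H; simpl; auto.
  rewrite H by (left; auto). rewrite IH by (intros; apply H; right; auto). auto.
Qed.

Lemma psat_agree k ar M phi : forall eO eO' eP eP',
  (forall v, In v (fvO phi) -> eO v = eO' v) ->
  (forall v, In v (fvP phi) -> eP v = eP' v) ->
  (psat k ar M eO eP phi <-> psat k ar M eO' eP' phi).
Proof.
  induction phi; intros eO eO' eP eP' HO HP; simpl in *.
  - rewrite (HO n) by auto. rewrite (HO n0) by auto. tauto.
  - rewrite (HP n) by auto. rewrite (HP n0) by auto. tauto.
  - rewrite (HP n0) by auto. rewrite (lookup_all_ext eO eO' l) by auto. tauto.
  - rewrite (IHphi eO eO' eP eP') by auto. tauto.
  - rewrite (IHphi1 eO eO' eP eP') by (intros; auto using in_or_app).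
    rewrite (IHphi2 eO eO' eP eP') by (intros; auto using in_or_app). tauto.
  - split; intros [a Ha]; exists a; revert Ha; apply IHphi; auto;
      intros v Hv; unfold upd; destruct (Nat.eqb v n); auto; symmetry; auto.
  - split; intros [a Ha]; exists a; revert Ha; apply IHphi; auto;
      intros v Hv; unfold upd; destruct (Nat.eqb v n); auto; symmetry; auto.
Qed.

Lemma psat_ext k ar M phi eO eO' eP eP' :
  (forall v, eO v = eO' v) -> (forall v, eP v = eP' v) ->
  (psat k ar M eO eP phi <-> psat k ar M eO' eP' phi).
Proof. intros; apply psat_agree; auto. Qed.

Lemma lookup_all_map {T U} (g : T -> U) (e : nat -> option T) ys :
  lookup_all (fun v => option_map g (e v)) ys = option_map (map g) (lookup_all e ys).
Proof.
  induction ys as [|y ys IH]; simpl; auto.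
  rewrite IH. destruct (e y); destruct (lookup_all e ys); reflexivity.
Qed.

Lemma lookup_all_length {T} (e : nat -> option T) ys zs :
  lookup_all e ys = Some zs -> length zs = length ys.
Proof.
  revert zs; induction ys as [|y ys IH]; simpl; intros zs H.
  - inversion H; auto.
  - destruct (e y); destruct (lookup_all e ys) eqn:E; inversion H; subst. simpl; f_equal; auto.
Qed.

Lemma psat_iso k ar M go gp (H : pisomorphism k ar M M go gp) phi :
  forall eO eP, psat k ar M eO eP phi <->
    psat k ar M (fun v => option_map go (eO v)) (fun v => option_map gp (eP v)) phi.
Proof.
  destruct H as [[Hio [Hip Hr]] [Hso Hsp]].
  induction phi; intros eO eP; simpl.
  - split.
    + intros [a [H1 H2]]. exists (go a). rewrite H1, H2; auto.
    + intros [a [H1 H2]]. destruct (eO n) eqn:E1; destruct (eO n0) eqn:E2; simpl in *; try discriminate.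
      inversion H1; inversion H2; subst. exists o. split; auto. f_equal. apply Hio; auto.
  - split.
    + intros [a [H1 H2]]. exists (gp a). rewrite H1, H2; auto.
    + intros [a [H1 H2]]. destruct (eP n) eqn:E1; destruct (eP n0) eqn:E2; simpl in *; try discriminate.
      inversion H1; inversion H2; subst. exists p. split; auto. f_equal. apply Hip; auto.
  - rewrite lookup_all_map. split.
    + intros [Hn [Hl [b [zs [H1 [H2 H3]]]]]]. split; auto. split; auto.
      exists (gp b), (map go zs). rewrite H1, H2. simpl. split; auto. split; auto.
      assert (length zs = ar n) by (rewrite (lookup_all_length _ _ _ H2); auto).
      apply (proj1 (Hr n b zs Hn H)); auto.
    + intros [Hn [Hl [b [zs [H1 [H2 H3]]]]]]. split; auto. split; auto.
      destruct (eP n0) as [b0|] eqn:E1; [|discriminate].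
      destruct (lookup_all eO l) as [zs0|] eqn:E2; [|discriminate].
      simpl in *. inversion H1; inversion H2; subst.
      exists b0, zs0. split; auto. split; auto.
      assert (length zs0 = ar n) by (rewrite (lookup_all_length _ _ _ E2); auto).
      apply (proj2 (Hr n b0 zs0 Hn H)); auto.
  - rewrite IHphi. tauto.
  - rewrite IHphi1, IHphi2. tauto.
  - split.
    + intros [a Ha]. exists (go a). rewrite IHphi in Ha. revert Ha. apply psat_ext; auto.
      intros v; unfold upd; destruct (Nat.eqb v n); auto.
    + intros [a Ha]. destruct (Hso a) as [a0 <-]. exists a0. rewrite IHphi. revert Ha. apply psat_ext; auto.
      intros v; unfold upd; destruct (Nat.eqb v n); auto.
  - split.
    + intros [a Ha]. exists (gp a). rewrite IHphi in Ha. revert Ha. apply psat_ext; auto.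
      intros v; unfold upd; destruct (Nat.eqb v n); auto.
    + intros [a Ha]. destruct (Hsp a) as [a0 <-]. exists a0. rewrite IHphi. revert Ha. apply psat_ext; auto.
      intros v; unfold upd; destruct (Nat.eqb v n); auto.
Qed.

Definition TT : pform := FNot (FAnd (FEqP 0 0) (FNot (FEqP 0 0))).
Lemma TT_sat k ar M eO eP : psat k ar M eO eP TT.
Proof. simpl. tauto. Qed.

Definition notin (x : nat) (zs : list nat) : pform :=
  fold_right (fun z acc => FAnd (FNot (FEqP x z)) acc) TT zs.

Lemma notin_sem k ar M eO eP x zs :
  psat k ar M eO eP (notin x zs) <-> forall z, In z zs -> ~ psat k ar M eO eP (FEqP x z).
Proof.
  induction zs as [|z zs IH].
  - simpl. split; [intros _ z Hz; destruct Hz | tauto].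
  - change (notin x (z::zs)) with (FAnd (FNot (FEqP x z)) (notin x zs)).
    change (psat k ar M eO eP (FAnd (FNot (FEqP x z)) (notin x zs))) with
      (~ psat k ar M eO eP (FEqP x z) /\ psat k ar M eO eP (notin x zs)).
    rewrite IH. split.
    + intros [H1 H2] z' [<-|Hz]; auto.
    + intros H; split; [apply H; left; auto|]. intros z' Hz; apply H; right; auto.
Qed.

Fixpoint AL (phi : pform) (x base n : nat) (zs : list nat) : pform :=
  match n with
  | 0 => TT
  | S m => FExP x (FAnd phi (FAnd (notin x zs)
             (FExP (base + m) (FAnd (FEqP (base + m) x) (AL phi x base m ((base + m) :: zs))))))
  end.

Lemma upd_neq {T} (e : nat -> T) n v m : m <> n -> upd e n v m = e m.
Proof. intros H; unfold upd; destruct (Nat.eqb_spec m n); subst; tauto. Qed.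
Lemma upd_eq {T} (e : nat -> T) n v : upd e n v n = v.
Proof. unfold upd; rewrite Nat.eqb_refl; auto. Qed.

Lemma AL_sem k ar M phi x base (Hx : x < base) (Hf : forall v, In v (fvP phi) -> v < base) :
  forall n zs vals eO eP,
  map eP zs = map Some vals -> (forall z, In z zs -> base + n <= z) ->
  (psat k ar M eO eP (AL phi x base n zs) <->
   exists ws : list (pc M), length ws = n /\ NoDup ws /\ (forall y, In y ws -> ~ In y vals) /\
     forall y, In y ws -> psat k ar M eO (upd eP x (Some y)) phi).
Proof.
  induction n; intros zs vals eO eP HF Hz.
  - simpl. split; intros _.
    + exists []. simpl. repeat split; auto; try constructor; intros; contradiction.
    + tauto.
  - cbn [AL psat].
    assert (Hin : forall z v, In z zs -> eP z = Some v -> In v vals).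
    { intros z v Hz' Hv. assert (In (eP z) (map eP zs)) by (apply in_map; auto).
      rewrite HF, Hv in H. apply in_map_iff in H. destruct H as [v' [E ?]]. inversion E; subst; auto. }
    assert (Hin2 : forall v, In v vals -> exists z, In z zs /\ eP z = Some v).
    { intros v Hv. assert (In (Some v) (map Some vals)) by (apply in_map; auto).
      rewrite <- HF in H. apply in_map_iff in H. destruct H as [z [E ?]]. eauto. }
    assert (Hphi : forall y u w, psat k ar M eO (upd (upd (upd eP x (Some y)) (base+n) (Some u)) x (Some w)) phi
                          <-> psat k ar M eO (upd eP x (Some w)) phi).
    { intros y u w. apply psat_agree; auto. intros v Hv. specialize (Hf v Hv).
      unfold upd. destruct (Nat.eqb_spec v x); auto. destruct (Nat.eqb_spec v (base+n)); [lia|auto]. }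
    split.
    + intros [a [H1 [H2 [u [[c [E1 E2]] H3]]]]].
      rewrite upd_eq in E1. rewrite upd_neq in E2 by lia. rewrite upd_eq in E2.
      assert (u = a) by congruence. subst u. clear E1 E2.
      rewrite (IHn ((base+n)::zs) (a::vals)) in H3.
      * destruct H3 as [ws [L [ND [N1 N2]]]].
        exists (a :: ws). simpl. split; [auto|]. split.
        { constructor; auto. intros Ha. apply (N1 a Ha). left; auto. }
        split.
        { intros y [<-|Hy].
          - intros Hv. destruct (Hin2 a Hv) as [z [Hz1 Hz2]].
            rewrite notin_sem in H2. apply (H2 z Hz1). exists a. rewrite upd_eq, upd_neq; auto.
            specialize (Hz z Hz1); lia.
          - intros Hv. apply (N1 y Hy). right; auto. }
        intros y [<-|Hy]; auto. apply (proj1 (Hphi a a y)). auto.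
      * simpl. rewrite upd_eq. f_equal. rewrite <- HF. apply map_ext_in.
        intros z Hz'. specialize (Hz z Hz'). rewrite !upd_neq by lia. auto.
      * intros z [<-|Hz']; [lia|]. specialize (Hz z Hz'); lia.
    + intros [ws [L [ND [N1 N2]]]]. destruct ws as [|a ws]; [discriminate|].
      simpl in L. injection L as L. apply NoDup_cons_iff in ND. destruct ND as [ND1 ND2].
      exists a. split; [apply N2; left; auto|]. split.
      { rewrite notin_sem. intros z Hz' [c [E1 E2]]. rewrite upd_eq in E1. inversion E1; subst.
        rewrite upd_neq in E2 by (specialize (Hz z Hz'); lia).
        apply (N1 c (or_introl eq_refl)). eapply Hin; eauto. }
      exists a. split.
      { exists a. rewrite upd_eq, upd_neq, upd_eq by lia. auto. }
      rewrite (IHn ((base+n)::zs) (a::vals)).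
      * exists ws. split; auto. split; auto. split.
        { intros y Hy [<-|Hv]; [exact (ND1 Hy)|]. apply (N1 y (or_intror Hy)); auto. }
        intros y Hy. apply (Hphi a a y). apply N2; right; auto.
      * simpl. rewrite upd_eq. f_equal. rewrite <- HF. apply map_ext_in.
        intros z Hz'. specialize (Hz z Hz'). rewrite !upd_neq by lia. auto.
      * intros z [<-|Hz']; [lia|]. specialize (Hz z Hz'); lia.
Qed.

Fixpoint ForallO (vs : list nat) (body : pform) : pform :=
  match vs with [] => body | v :: vs' => FNot (FExO v (FNot (ForallO vs' body))) end.
Fixpoint ForallP (vs : list nat) (body : pform) : pform :=
  match vs with [] => body | v :: vs' => FNot (FExP v (FNot (ForallP vs' body))) end.

Lemma ForallO_intro k ar M vs body : forall eO eP,
  (forall eO', (forall v, ~ In v vs -> eO' v = eO v) -> (forall v, In v vs -> eO' v <> None) ->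
     psat k ar M eO' eP body) -> psat k ar M eO eP (ForallO vs body).
Proof.
  induction vs as [|v vs IH]; intros eO eP H; simpl.
  - apply H; auto.
  - intros [a Ha]. apply Ha. apply IH. intros eO' H1 H2. apply H.
    + intros w Hw. rewrite H1 by (intros Hc; apply Hw; right; auto). apply upd_neq. intros ->; apply Hw; left; auto.
    + intros w [E|Hw]; [subst w|auto]. destruct (in_dec Nat.eq_dec v vs); auto.
      rewrite H1 by auto. rewrite upd_eq. discriminate.
Qed.

Lemma ForallO_elim k ar M vs body : forall eO eP, psat k ar M eO eP (ForallO vs body) ->
  forall eO', (forall v, ~ In v vs -> eO' v = eO v) -> (forall v, In v vs -> eO' v <> None) ->
     psat k ar M eO' eP body.
Proof.
  induction vs as [|v vs IH]; intros eO eP H eO' H1 H2; simpl in H.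
  - revert H. apply psat_ext; intros w; auto.
  - destruct (eO' v) as [a|] eqn:Ea; [|exfalso; apply (H2 v); auto; left; auto].
    apply (IH (upd eO v (Some a))).
    + apply NNPP. intros Hn. apply H. exists a. auto.
    + intros w Hw. unfold upd. destruct (Nat.eqb_spec w v); subst; auto.
      apply H1. intros [?|?]; auto.
    + intros w Hw; apply H2; right; auto.
Qed.

Lemma ForallP_intro k ar M vs body : forall eO eP,
  (forall eP', (forall v, ~ In v vs -> eP' v = eP v) -> (forall v, In v vs -> eP' v <> None) ->
     psat k ar M eO eP' body) -> psat k ar M eO eP (ForallP vs body).
Proof.
  induction vs as [|v vs IH]; intros eO eP H; simpl.
  - apply H; auto.
  - intros [a Ha]. apply Ha. apply IH. intros eP' H1 H2. apply H.
    + intros w Hw. rewrite H1 by (intros Hc; apply Hw; right; auto). apply upd_neq. intros ->; apply Hw; left; auto.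
    + intros w [E|Hw]; [subst w|auto]. destruct (in_dec Nat.eq_dec v vs); auto.
      rewrite H1 by auto. rewrite upd_eq. discriminate.
Qed.

Lemma ForallP_elim k ar M vs body : forall eO eP, psat k ar M eO eP (ForallP vs body) ->
  forall eP', (forall v, ~ In v vs -> eP' v = eP v) -> (forall v, In v vs -> eP' v <> None) ->
     psat k ar M eO eP' body.
Proof.
  induction vs as [|v vs IH]; intros eO eP H eP' H1 H2; simpl in H.
  - revert H. apply psat_ext; intros w; auto.
  - destruct (eP' v) as [a|] eqn:Ea; [|exfalso; apply (H2 v); auto; left; auto].
    apply (IH eO (upd eP v (Some a))).
    + apply NNPP. intros Hn. apply H. exists a. auto.
    + intros w Hw. unfold upd. destruct (Nat.eqb_spec w v); subst; auto.
      apply H1. intros [?|?]; auto.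
    + intros w Hw; apply H2; right; auto.
Qed.

Lemma sig_eq {A} {P : A -> Prop} (x y : {a | P a}) : proj1_sig x = proj1_sig y -> x = y.
Proof. destruct x, y; simpl; intros ->; f_equal; apply proof_irrelevance. Qed.

Fixpoint sig_list {T} (l : list T) : list {y | In y l} :=
  match l with
  | [] => []
  | a :: l' => exist _ a (in_eq a l') ::
       map (fun s => exist (fun y => In y (a :: l')) (proj1_sig s) (in_cons a _ l' (proj2_sig s))) (sig_list l')
  end.

Lemma sig_list_fin {T} (l : list T) : is_finite {y | In y l}.
Proof.
  exists (sig_list l). induction l as [|a l IH]; intros [y Hy]; simpl.
  - destruct Hy.
  - destruct Hy as [E|Hy].
    + left. apply sig_eq; simpl; auto.
    + right. apply in_map_iff. exists (exist _ y Hy). split; [apply sig_eq; auto| apply IH].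
Qed.

Lemma core k ar K M (HM : fraisse_limit k ar (Kpfc k ar K) M)
  (lo : list (oc M)) (lp : list (pc M)) (w : pc M) (Hw : ~ In w lp) (n : nat) :
  exists go0 gp0 (ts : nat -> pc M), pisomorphism k ar M M go0 gp0 /\
   (forall i j, i < n -> j < n -> ts i = ts j -> i = j) /\
   forall j, j < n -> exists go gp, pisomorphism k ar M M go gp /\
     (forall a, In a lo -> go a = go0 a) /\ (forall c, In c lp -> gp c = gp0 c) /\ gp w = ts j.
Proof.
  destruct HM as [_ [_ [Hage [Hemb Huh]]]].
  set (D := psubstr M (fun a => In a lo) (fun c => In c (w :: lp))).
  assert (HKD : Kpfc k ar K D) by (apply Hage; apply sig_list_fin).
  set (cval (c : ({c | In c (w::lp)} + {m | In m (seq 0 n)})%type) :=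
         match c with inl s => proj1_sig s | inr _ => w end).
  set (C := {| oc := {a | In a lo}; pc := ({c | In c (w::lp)} + {m | In m (seq 0 n)})%type;
               prel := fun i c ys => prel M i (cval c) (map (@proj1_sig _ _) ys) |}).
  assert (HKC : Kpfc k ar K C).
  { destruct HKD as [_ [_ HF]]. split; [apply sig_list_fin|]. split.
    - destruct (sig_list_fin (w::lp)) as [l1 H1]. destruct (sig_list_fin (seq 0 n)) as [l2 H2].
      exists (map inl l1 ++ map inr l2). intros [s|s]; apply in_or_app; [left|right]; apply in_map; auto.
    - intros [s|s].
      + exact (HF s).
      + exact (HF (exist _ w (in_eq w lp))). }
  destruct (Hemb C HKC) as [fo [fp [Hfo [Hfp Hfr]]]].
  assert (G : forall sg : {c | In c (w::lp)} -> pc C, (forall s1 s2, sg s1 = sg s2 -> s1 = s2) ->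
     (forall s, cval (sg s) = proj1_sig s) ->
     exists go gp, pisomorphism k ar M M go gp /\ (forall s : {a | In a lo}, go (proj1_sig s) = fo s) /\
        (forall s, gp (proj1_sig s) = fp (sg s))).
  { intros sg Hsi Hsv.
    set (TO := fun a => exists s, fo s = a). set (TP := fun c => exists s, fp (sg s) = c).
    set (fo' := fun s : {a | In a lo} => exist TO (fo s) (ex_intro _ s eq_refl)).
    set (fp' := fun s : {c | In c (w::lp)} => exist TP (fp (sg s)) (ex_intro _ s eq_refl)).
    destruct (Huh (fun a => In a lo) (fun c => In c (w::lp)) TO TP fo' fp') as [go [gp [H1 [H2 H3]]]].
    - apply sig_list_fin.
    - apply sig_list_fin.
    - split; [split; [|split]|split].
      + intros x y E. apply Hfo. apply (f_equal (@proj1_sig _ _) E).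
      + intros x y E. apply Hsi, Hfp. apply (f_equal (@proj1_sig _ _) E).
      + intros i b ys Hi Hl. simpl. rewrite map_map. simpl.
        change (map (fun x : {x : oc M | In x lo} => fo x) ys) with (map fo ys).
        rewrite <- (Hfr i (sg b) ys Hi Hl). unfold C; cbn [prel]. rewrite Hsv. tauto.
      + intros [a [s E]]. exists s. apply sig_eq. simpl; auto.
      + intros [a [s E]]. exists s. apply sig_eq. simpl; auto.
    - exists go, gp. split; auto. }
  destruct (G inl) as [go0 [gp0 [H0 [H0o H0p]]]].
  { intros s1 s2 E; inversion E; auto. }
  { intros s; reflexivity. }
  set (ts := fun j => match in_dec Nat.eq_dec j (seq 0 n) with
                      | left h => fp (inr (exist _ j h)) | right _ => w end).
  exists go0, gp0, ts. split; auto. split.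
  - intros i j Hi Hj. unfold ts.
    destruct (in_dec Nat.eq_dec i (seq 0 n)) as [hi|hi]; [|exfalso; apply hi, in_seq; lia].
    destruct (in_dec Nat.eq_dec j (seq 0 n)) as [hj|hj]; [|exfalso; apply hj, in_seq; lia].
    intros E. apply Hfp in E. inversion E; auto.
  - intros j Hj.
    assert (hj : In j (seq 0 n)) by (apply in_seq; lia).
    set (sg := fun s : {c | In c (w::lp)} =>
           if excluded_middle_informative (proj1_sig s = w) then (inr (exist _ j hj) : pc C) else inl s).
    destruct (G sg) as [go [gp [Hj0 [Hjo Hjp]]]].
    + intros s1 s2. unfold sg.
      destruct (excluded_middle_informative (proj1_sig s1 = w));
      destruct (excluded_middle_informative (proj1_sig s2 = w)); intros E; try discriminate.
      * apply sig_eq. congruence.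
      * inversion E; auto.
    + intros s. unfold sg. destruct (excluded_middle_informative (proj1_sig s = w)); simpl; auto.
    + exists go, gp. split; auto. split; [|split].
      * intros a Ha. specialize (Hjo (exist _ a Ha)). specialize (H0o (exist _ a Ha)).
        simpl in *. congruence.
      * intros c Hc. specialize (Hjp (exist _ c (in_cons w c lp Hc))). specialize (H0p (exist _ c (in_cons w c lp Hc))).
        simpl in *. rewrite Hjp, H0p.
        unfold sg. simpl. destruct (excluded_middle_informative (c = w)); auto.
        subst; contradiction.
      * specialize (Hjp (exist _ w (in_eq w lp))). simpl in Hjp. rewrite Hjp. unfold sg, ts. simpl.
        destruct (excluded_middle_informative (w = w)); [|tauto].
        destruct (in_dec Nat.eq_dec j (seq 0 n)) as [h|h]; [|contradiction].
        f_equal. f_equal. apply sig_eq; auto.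
Qed.

Lemma build {T} (R : nat -> T -> Prop) n : (forall j, j < n -> exists y, R j y) ->
  (forall i j y, i < n -> j < n -> R i y -> R j y -> i = j) ->
  exists ys, length ys = n /\ NoDup ys /\ forall y, In y ys -> exists j, j < n /\ R j y.
Proof.
  induction n; intros H1 H2.
  - exists []. repeat split; [constructor| intros y []].
  - destruct IHn as [ys [L [ND Hy]]].
    + intros j Hj; apply H1; lia.
    + intros i j y Hi Hj; apply H2; lia.
    + destruct (H1 n (Nat.lt_succ_diag_r n)) as [y Ry].
      exists (y :: ys). simpl. split; [auto|]. split.
      * constructor; auto. intros Hin. destruct (Hy y Hin) as [j [Hj Rj]].
        assert (n = j) by (apply (H2 n j y); auto; lia). lia.
      * intros z [<-|Hz]; [exists n; split; auto|]. destruct (Hy z Hz) as [j [Hj Rj]]. exists j; split; auto.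
Qed.

Lemma in_le_max v l : In v l -> v <= list_max l.
Proof.
  intros H. assert (Forall (fun m => m <= list_max l) l) by (apply list_max_le; auto).
  rewrite Forall_forall in H0. auto.
Qed.

Lemma upd_upd {T} (e : nat -> T) x a b' : forall v, upd (upd e x a) x b' v = upd e x b' v.
Proof. intros v; unfold upd; destruct (Nat.eqb v x); auto. Qed.

Theorem lemma4p6 (k : nat) (ar : nat -> nat) (K : Lstr -> Prop)
  (HK : fraisse_class k ar K) (HSAP : SAP k ar K)
  (M : Pstr) (HM : fraisse_limit k ar (Kpfc k ar K) M)
  (N : Pstr) (HN : elem_equiv k ar M N)
  (A0 : oc N -> Prop) (B0 : pc N -> Prop) :
  forall b : pc N, in_aclP k ar N A0 B0 b <-> B0 b.
Proof.
  intros b; split.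
  2:{ intros HB. exists (FEqP 0 1), 0, (fun _ => None), (upd (fun _ => None) 1 (Some b)).
      split; [intros; discriminate|]. split.
      { intros m c Hm. unfold upd. destruct (Nat.eqb m 1); intros E; [inversion E; subst; auto|discriminate]. }
      split.
      { exists b. simpl. auto. }
      exists [b]. intros b' [c [E1 E2]]. simpl in E1, E2. unfold upd in E1, E2. simpl in E1, E2.
      left; congruence. }
  intros [phi [x [eO [eP [HO [HP [Hs [l Hl]]]]]]]]. apply NNPP; intro HB.
  set (VOa := filter (fun v => match eO v with Some _ => true | None => false end) (fvO phi)).
  set (VPa := filter (fun v => negb (Nat.eqb v x) && match eP v with Some _ => true | None => false end) (fvP phi)).
  set (base := S (list_max (x :: fvP phi))).
  assert (Hx : x < base) by (unfold base; pose proof (in_le_max x (x :: fvP phi) (in_eq _ _)); lia).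
  assert (Hf : forall v, In v (fvP phi) -> v < base)
    by (intros v Hv; unfold base; pose proof (in_le_max v (x :: fvP phi) (in_cons _ _ _ Hv)); lia).
  assert (HxV : forall p, In p VPa -> p <> x).
  { intros p Hp. apply filter_In in Hp. destruct Hp as [_ Hp]. apply andb_prop in Hp. destruct Hp as [Hp _].
    intros ->. rewrite Nat.eqb_refl in Hp. discriminate. }
  set (n := S (length l)).
  set (body := FNot (FExP x (FAnd phi (FAnd (notin x VPa) (FNot (AL phi x base n [])))))).
  set (sent := ForallO VOa (ForallP VPa body)).
  assert (HMs : psat k ar M (fun _ => None) (fun _ => None) sent).
  { apply ForallO_intro; intros eO' H1 H2; apply ForallP_intro; intros eP' H3 H4.
    intros [w [Hw1 [Hw2 Hw3]]]. apply Hw3.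
    set (lo := flat_map (fun v => match eO' v with Some a => [a] | None => [] end) VOa).
    set (lp := flat_map (fun v => match eP' v with Some a => [a] | None => [] end) VPa).
    assert (Hwlp : ~ In w lp).
    { intro Hin. apply in_flat_map in Hin. destruct Hin as [p [Hp Hc]].
      destruct (eP' p) eqn:E; [|destruct Hc]. destruct Hc as [<-|[]].
      rewrite notin_sem in Hw2. apply (Hw2 p Hp). exists p0. rewrite upd_eq, upd_neq; auto. }
    destruct (core k ar K M HM lo lp w Hwlp n) as [go0 [gp0 [ts [H0 [Hts Hj]]]]].
    destruct (build (fun j y => gp0 y = ts j) n) as [ws [L [ND Hws]]].
    - intros j Hj'. destruct H0 as [_ [_ Hsur]]. apply Hsur.
    - intros i j y Hi Hj' E1 E2. apply Hts; congruence.
    - apply (AL_sem k ar M phi x base Hx Hf n [] [] eO' (upd eP' x (Some w))); auto; [intros z []|].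
      exists ws; split; auto; split; auto; split; [intros y _ []|].
      intros y Hy. destruct (Hws y Hy) as [j [Hj' E]]. destruct (Hj j Hj') as [go [gp [Hg [Hgo [Hgp Hgw]]]]].
      rewrite (psat_ext k ar M phi eO' eO' _ (upd eP' x (Some y))) by (auto; apply upd_upd).
      rewrite (psat_iso k ar M go0 gp0 H0).
      rewrite (psat_iso k ar M go gp Hg) in Hw1. revert Hw1. apply psat_ext.
      + intros v. destruct (eO' v) as [a|] eqn:E'; simpl; auto. f_equal.
        destruct (in_dec Nat.eq_dec v VOa) as [Hv|Hv]; [|rewrite H1 in E' by auto; discriminate].
        symmetry; apply Hgo. apply in_flat_map. exists v. rewrite E'. split; auto. left; auto.
      + intros v. unfold upd. destruct (Nat.eqb v x); simpl; [congruence|].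
        destruct (eP' v) as [c|] eqn:E'; simpl; auto. f_equal.
        destruct (in_dec Nat.eq_dec v VPa) as [Hv|Hv]; [|rewrite H3 in E' by auto; discriminate].
        symmetry; apply Hgp. apply in_flat_map. exists v. rewrite E'. split; auto. left; auto. }
  apply HN in HMs.
  set (eO2 := fun v => if in_dec Nat.eq_dec v VOa then eO v else None).
  set (eP2 := fun v => if in_dec Nat.eq_dec v VPa then eP v else None).
  assert (Hbody : psat k ar N eO2 eP2 body).
  { apply (ForallP_elim k ar N VPa body eO2 (fun _ => None)).
    - apply (ForallO_elim k ar N VOa _ (fun _ => None) (fun _ => None) HMs).
      + intros v Hv. unfold eO2. destruct (in_dec Nat.eq_dec v VOa); tauto.
      + intros v Hv. unfold eO2. destruct (in_dec Nat.eq_dec v VOa); [|tauto].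
        apply filter_In in Hv. destruct Hv as [_ Hv]. destruct (eO v); discriminate.
    - intros v Hv. unfold eP2. destruct (in_dec Nat.eq_dec v VPa); tauto.
    - intros v Hv. unfold eP2. destruct (in_dec Nat.eq_dec v VPa); [|tauto].
      apply filter_In in Hv. destruct Hv as [_ Hv]. apply andb_prop in Hv. destruct Hv as [_ Hv].
      destruct (eP v); discriminate. }
  assert (Hag : forall y, psat k ar N eO (upd eP x (Some y)) phi <-> psat k ar N eO2 (upd eP2 x (Some y)) phi).
  { intros y. apply psat_agree.
    - intros v Hv. unfold eO2. destruct (in_dec Nat.eq_dec v VOa) as [|Hn]; auto.
      destruct (eO v) eqn:E; auto. exfalso; apply Hn. apply filter_In. rewrite E; auto.
    - intros v Hv. unfold upd. destruct (Nat.eqb_spec v x); auto.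
      unfold eP2. destruct (in_dec Nat.eq_dec v VPa) as [|Hn]; auto.
      destruct (eP v) eqn:E; auto. exfalso; apply Hn. apply filter_In. rewrite E.
      split; auto. apply Nat.eqb_neq in n0. rewrite n0. auto. }
  apply Hbody. exists b. split; [apply Hag; auto|]. split.
  - rewrite notin_sem. intros p Hp [a [E1 E2]]. rewrite upd_eq in E1. injection E1 as <-.
    rewrite upd_neq in E2 by (apply HxV; auto). unfold eP2 in E2.
    destruct (in_dec Nat.eq_dec p VPa); [|discriminate].
    apply HB. apply (HP p b); auto.
  - intros HAL. rewrite (AL_sem k ar N phi x base Hx Hf n [] [] eO2 (upd eP2 x (Some b))) in HAL; auto;
      [|intros z []].
    destruct HAL as [ws [L [ND [_ Hws]]]].
    assert (incl ws l).
    { intros y Hy. apply Hl. apply Hag. specialize (Hws y Hy). revert Hws. apply psat_ext; auto. intros v; symmetry; apply upd_upd. }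
    pose proof (NoDup_incl_length ND H). unfold n in L. lia.
Qed.
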